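(* Let $k$ be a commutative ring and $P,Q$ invertible $k$-modules. If $A$ is a $P$-Frobenius $k$-algebra and $B$ is a $Q$-Frobenius $k$-algebra, then the tensor product algebra $A\otimes_kB$ is a $P\otimes_kQ$-Frobenius algebra.
   Context: A $k$-module is invertible if it is finitely generated projective of constant rank one. For an invertible $P$, a $k$-algebra $A$ is $P$-Frobenius if it is finitely generated projective over $k$ and $A_A\cong\mathrm{Hom}_k(A,P)_A$ as right $A$-modules, where $(fa)(x)=f(ax)$. *)

(* Defs.v *)
From HB Require Import structures.
From mathcomp Require Import all_boot all_order all_algebra.

Set Implicit Arguments.
Unset Strict Implicit.
Unset Printing Implicit Defensive.

Import GRing.Theory.
Local Open Scope ring_scope.

(* Throughout, k is a commutative ring (possibly the zero ring) and k-modules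
   are MathComp left modules [lmodType k]. *)

Section Defs.
Variable k : comPzRingType.

Definition klinear (M N : lmodType k) (f : M -> N) : Prop :=
  forall (a : k) (x y : M), f (a *: x + y) = a *: f x + f y.

Definition kbilinear (M N X : lmodType k) (f : M -> N -> X) : Prop :=
  (forall m, klinear (f m)) /\ (forall n, klinear (fun m => f m n)).

(* A (unital, associative) k-algebra structure on the k-module A:
   a k-bilinear associative multiplication with a two-sided unit.
   (The zero algebra is allowed, unlike MathComp's [algType].) *)
Definition is_kalg (A : lmodType k) (mul : A -> A -> A) (one : A) : Prop :=
  [/\ kbilinear mul,
      forall x y z, mul x (mul y z) = mul (mul x y) z,
      forall x, mul one x = x &
      forall x, mul x one = x].

Definition fgproj (M : lmodType k) : Prop :=
  exists n (s : M -> 'rV[k]_n) (r : 'rV[k]_n -> M),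
    [/\ klinear s, klinear r & cancel s r].

(* M is invertible: finitely generated projective of constant rank one.
   For a presentation M = retract of k^n via s, r, the idempotent matrix
   E = (s o r) represents M; the rank of M at a point is the dimension of
   F (x)_k M for the residue field F, i.e. the rank of the image of E in F.
   Constant rank one: this dimension is 1 for every ring map k -> F into a
   field F. *)
Definition invertible_mod (M : lmodType k) : Prop :=
  exists n (s : M -> 'rV[k]_n) (r : 'rV[k]_n -> M),
    [/\ klinear s, klinear r, cancel s r &
      forall (F : fieldType) (phi : {rmorphism k -> F}),
        \rank (map_mx phi (\matrix_(i < n) s (r (delta_mx 0 i)))) = 1%N].

Definition is_tensor (M N T : lmodType k) (t : M -> N -> T) : Prop :=
  kbilinear t /\
  forall (X : lmodType k) (f : M -> N -> X), kbilinear f ->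
    (exists g : T -> X, klinear g /\ forall m n, g (t m n) = f m n) /\
    (forall g1 g2 : T -> X, klinear g1 -> klinear g2 ->
       (forall m n, g1 (t m n) = f m n) ->
       (forall m n, g2 (t m n) = f m n) -> g1 =1 g2).

(* A (with multiplication mul, unit one) is P-Frobenius: A is finitely
   generated projective over k and A_A is isomorphic, as a right A-module,
   to Hom_k(A, P) with (f a)(x) = f (a x). *)
Definition is_Frobenius (A : lmodType k) (mul : A -> A -> A) (one : A)
    (P : lmodType k) : Prop :=
  fgproj A /\
  exists phi : A -> A -> P,
    [/\ forall x, klinear (phi x),
        forall x y z, phi (x + y) z = phi x z + phi y z,
        forall x a z, phi (mul x a) z = phi x (mul a z),
        forall x y, phi x =1 phi y -> x = y &
        forall f : A -> P, klinear f -> exists x, phi x =1 f].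

End Defs.

(* Main.v *)
Require Import Defs.
From HB Require Import structures.
From mathcomp Require Import all_boot all_order all_algebra.
From Stdlib Require Import ClassicalEpsilon.

Set Implicit Arguments.
Unset Strict Implicit.
Unset Printing Implicit Defensive.
Import GRing.Theory.
Local Open Scope ring_scope.

Section Gen.
Variable k : comPzRingType.

Section Lin.
Variables M N : lmodType k.
Variable f : M -> N.
Hypothesis Hf : klinear f.

Lemma lin0 : f 0 = 0.
Proof. have := Hf (-1) 0 0; rewrite scaler0 addr0 scaleNr scale1r addNr; done. Qed.
Lemma linD x y : f (x + y) = f x + f y.
Proof. by have := Hf 1 x y; rewrite !scale1r. Qed.
Lemma linZ a x : f (a *: x) = a *: f x.
Proof. by have := Hf a x 0; rewrite !addr0 lin0 addr0. Qed.
Lemma lin_sum (I : Type) (r : seq I) (Pr : pred I) (F : I -> M) :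
  f (\sum_(i <- r | Pr i) F i) = \sum_(i <- r | Pr i) f (F i).
Proof. exact: (big_morph f linD lin0). Qed.
End Lin.

Lemma klinear_comp (M N X : lmodType k) (f : M -> N) (g : N -> X) :
  klinear f -> klinear g -> klinear (fun x => g (f x)).
Proof. by move=> Hf Hg a x y; rewrite Hf Hg. Qed.

Lemma klinear_sum (M N : lmodType k) (I : Type) (r : seq I) (F : I -> M -> N) :
  (forall i, klinear (F i)) -> klinear (fun x => \sum_(i <- r) F i x).
Proof.
move=> HF a x y; rewrite scaler_sumr -big_split /=.
by apply: eq_bigr => i _; rewrite HF.
Qed.

Lemma klinear_scale (M : lmodType k) (c : k) : klinear (fun x : M => c *: x).
Proof. by move=> a x y; rewrite scalerDr !scalerA mulrC. Qed.

Lemma klinear_id (M : lmodType k) : klinear (fun x : M => x).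
Proof. by []. Qed.

Section Tensor.
Variables M N T : lmodType k.
Variable t : M -> N -> T.
Hypothesis Ht : is_tensor t.

Lemma tbil : kbilinear t. Proof. exact: Ht.1. Qed.
Lemma tlinl n : klinear (fun m => t m n). Proof. exact: tbil.2. Qed.
Lemma tlinr m : klinear (t m). Proof. exact: tbil.1. Qed.

Lemma kbil_comp (X : lmodType k) (g : T -> X) : klinear g ->
  kbilinear (fun m n => g (t m n)).
Proof.
move=> Hg; split=> [m|n]; first exact: klinear_comp (tlinr m) Hg.
exact: klinear_comp (tlinl n) Hg.
Qed.

Lemma tensor_ext (X : lmodType k) (g1 g2 : T -> X) :
  klinear g1 -> klinear g2 -> (forall m n, g1 (t m n) = g2 (t m n)) ->
  g1 =1 g2.
Proof.
move=> H1 H2 E.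
exact: ((Ht.2 X _ (kbil_comp H1)).2 g1 g2 H1 H2 (fun _ _ => erefl) (fun m n => esym (E m n))).
Qed.

Definition tlift (X : lmodType k) (f : M -> N -> X) (Hf : kbilinear f) : T -> X :=
  proj1_sig (constructive_indefinite_description _ ((Ht.2 X f Hf).1)).

Lemma tlift_lin (X : lmodType k) (f : M -> N -> X) (Hf : kbilinear f) :
  klinear (tlift Hf).
Proof. exact: (proj2_sig (constructive_indefinite_description _ ((Ht.2 X f Hf).1))).1. Qed.

Lemma tlift_tt (X : lmodType k) (f : M -> N -> X) (Hf : kbilinear f) m n :
  tlift Hf (t m n) = f m n.
Proof. exact: (proj2_sig (constructive_indefinite_description _ ((Ht.2 X f Hf).1))).2. Qed.

Lemma t_sum (I J : Type) (r : seq I) (s : seq J) (F : I -> M) (G : J -> N) :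
  t (\sum_(i <- r) F i) (\sum_(j <- s) G j) = \sum_(i <- r) \sum_(j <- s) t (F i) (G j).
Proof.
rewrite (lin_sum (tlinl _)); apply: eq_bigr => i _; exact: (lin_sum (tlinr _)).
Qed.
End Tensor.
End Gen.
Section Frob.
Variable k : comPzRingType.
Variables P A : lmodType k.
Variables (mulA : A -> A -> A) (oneA : A).
Hypothesis HA : is_kalg mulA oneA.
Variable phiA : A -> A -> P.
Hypotheses (phiA_lin : forall x, klinear (phiA x))
  (phiA_add : forall x y z, phiA (x + y) z = phiA x z + phiA y z)
  (phiA_mul : forall x a z, phiA (mulA x a) z = phiA x (mulA a z))
  (phiA_inj : forall x y, phiA x =1 phiA y -> x = y)
  (phiA_surj : forall f : A -> P, klinear f -> exists x, phiA x =1 f).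
Variables (nA : nat) (sA : A -> 'rV[k]_nA) (rA : 'rV[k]_nA -> A).
Hypotheses (sA_lin : klinear sA) (rA_lin : klinear rA) (sAK : cancel sA rA).

Lemma phi_linl z : klinear (fun x => phiA x z).
Proof.
case: HA => [[mr ml] _ m1l m1r].
have mZ x c : mulA x (c *: oneA) = c *: x.
  by have := mr x c oneA 0; rewrite (lin0 (mr x)) !addr0 m1r.
have Zm c z' : mulA (c *: oneA) z' = c *: z'.
  by have := ml z' c oneA 0; rewrite (lin0 (ml z')) !addr0 m1l.
move=> c x y; rewrite phiA_add -mZ phiA_mul Zm (linZ (phiA_lin x)) //.
Qed.

Definition eb (i : 'I_nA) := rA (delta_mx 0 i).
Definition fb (i : 'I_nA) a := sA a 0 i.

Lemma fb_lin i c x y : fb i (c *: x + y) = c * fb i x + fb i y.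
Proof. by rewrite /fb sA_lin !mxE. Qed.

Lemma decomp a : a = \sum_i fb i a *: eb i.
Proof.
transitivity (rA (sA a)); first by rewrite sAK.
rewrite {1}(row_sum_delta (sA a)) (lin_sum rA_lin).
by apply: eq_bigr => i _; rewrite (linZ rA_lin).
Qed.

Lemma fbp_lin i (p : P) : klinear (fun a => fb i a *: p).
Proof. by move=> c x y; rewrite fb_lin scalerDl scalerA. Qed.

Definition al i p := proj1_sig (constructive_indefinite_description _ (phiA_surj (fbp_lin i p))).

Lemma al_spec i p a : phiA (al i p) a = fb i a *: p.
Proof. exact: (proj2_sig (constructive_indefinite_description _ (phiA_surj (fbp_lin i p)))). Qed.

Lemma al_lin i : klinear (al i).
Proof.
move=> c p q; apply: phiA_inj => z.
rewrite phi_linl !al_spec scalerDr !scalerA mulrC //.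
Qed.

Lemma al_rec a : \sum_i al i (phiA a (eb i)) = a.
Proof.
apply: phiA_inj => z.
rewrite (lin_sum (phi_linl z)) {2}(decomp z) (lin_sum (phiA_lin a)).
by apply: eq_bigr => i _; rewrite al_spec (linZ (phiA_lin a)).
Qed.
End Frob.


Lemma klinear_lc (k : comPzRingType) (M N : lmodType k) (c : k) (f g : M -> N) :
  klinear f -> klinear g -> klinear (fun z => c *: f z + g z).
Proof.
move=> Hf Hg a x y; rewrite Hf Hg !scalerDr !scalerA mulrC.
by rewrite addrACA.
Qed.
Section Main.
Variable k : comPzRingType.
Variables P Q A B T U : lmodType k.
Variables (mulA : A -> A -> A) (oneA : A) (mulB : B -> B -> B) (oneB : B).
Variables (t : A -> B -> T) (mulT : T -> T -> T) (u : P -> Q -> U).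
Hypothesis HA : is_kalg mulA oneA.
Hypothesis HB : is_kalg mulB oneB.
Hypothesis Ht : is_tensor t.
Hypothesis Hu : is_tensor u.
Hypothesis HT : kbilinear mulT.
Hypothesis HmulT : forall a b a' b', mulT (t a b) (t a' b') = t (mulA a a') (mulB b b').
Variable phiA : A -> A -> P.
Hypotheses (phiA_lin : forall x, klinear (phiA x))
  (phiA_add : forall x y z, phiA (x + y) z = phiA x z + phiA y z)
  (phiA_mul : forall x a z, phiA (mulA x a) z = phiA x (mulA a z))
  (phiA_inj : forall x y, phiA x =1 phiA y -> x = y)
  (phiA_surj : forall f : A -> P, klinear f -> exists x, phiA x =1 f).
Variable phiB : B -> B -> Q.
Hypotheses (phiB_lin : forall x, klinear (phiB x))
  (phiB_add : forall x y z, phiB (x + y) z = phiB x z + phiB y z)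
  (phiB_mul : forall x a z, phiB (mulB x a) z = phiB x (mulB a z))
  (phiB_inj : forall x y, phiB x =1 phiB y -> x = y)
  (phiB_surj : forall f : B -> Q, klinear f -> exists x, phiB x =1 f).
Variables (nA : nat) (sA : A -> 'rV[k]_nA) (rA : 'rV[k]_nA -> A).
Hypotheses (sA_lin : klinear sA) (rA_lin : klinear rA) (sAK : cancel sA rA).
Variables (nB : nat) (sB : B -> 'rV[k]_nB) (rB : 'rV[k]_nB -> B).
Hypotheses (sB_lin : klinear sB) (rB_lin : klinear rB) (sBK : cancel sB rB).

Lemma phiA_linl z : klinear (fun x => phiA x z). Proof. exact: (phi_linl HA phiA_lin phiA_add phiA_mul z). Qed.
Lemma phiB_linl z : klinear (fun x => phiB x z). Proof. exact: (phi_linl HB phiB_lin phiB_add phiB_mul z). Qed.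
Definition alA := al phiA_surj sA_lin.
Definition alB := al phiB_surj sB_lin.
Lemma alA_lin i : klinear (alA i). Proof. exact: (al_lin HA phiA_lin phiA_add phiA_mul phiA_inj phiA_surj sA_lin i). Qed.
Lemma alB_lin i : klinear (alB i). Proof. exact: (al_lin HB phiB_lin phiB_add phiB_mul phiB_inj phiB_surj sB_lin i). Qed.
Lemma alA_rec a : \sum_i alA i (phiA a (eb rA i)) = a. Proof. exact: (al_rec HA phiA_lin phiA_add phiA_mul phiA_inj phiA_surj sA_lin rA_lin sAK). Qed.
Lemma alB_rec a : \sum_i alB i (phiB a (eb rB i)) = a. Proof. exact: (al_rec HB phiB_lin phiB_add phiB_mul phiB_inj phiB_surj sB_lin rB_lin sBK). Qed.

Lemma Psi_bil a b : kbilinear (fun a' b' => u (phiA a a') (phiB b b')).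
Proof.
split=> [a'|b']; first exact: klinear_comp (phiB_lin b) (tlinr Hu _).
exact: klinear_comp (phiA_lin a) (tlinl Hu _).
Qed.
Definition Psi a b := tlift Ht (Psi_bil a b).
Lemma Psi_tt a b a' b' : Psi a b (t a' b') = u (phiA a a') (phiB b b').
Proof. exact: tlift_tt. Qed.
Lemma Psi_lin a b : klinear (Psi a b).
Proof. exact: tlift_lin. Qed.

Lemma Psiz_bil z : kbilinear (fun a b => Psi a b z).
Proof.
split=> [a|b] c x y; move: z; apply: (tensor_ext Ht).
- exact: Psi_lin.
- by apply: klinear_lc; apply: Psi_lin.
- by move=> a' b'; rewrite !Psi_tt phiB_linl (tlinr Hu).
- exact: Psi_lin.
- by apply: klinear_lc; apply: Psi_lin.
- by move=> a' b'; rewrite !Psi_tt phiA_linl (tlinl Hu).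
Qed.

Definition phiT x z := tlift Ht (Psiz_bil z) x.
Lemma phiT_tt a b z : phiT (t a b) z = Psi a b z.
Proof. exact: tlift_tt. Qed.
Lemma phiT_linl z : klinear (fun x => phiT x z).
Proof. exact: tlift_lin. Qed.
Lemma phiT_lin x : klinear (phiT x).
Proof.
move=> c z z'; move: x; apply: (tensor_ext Ht).
- exact: phiT_linl.
- by apply: klinear_lc; apply: phiT_linl.
- by move=> a b; rewrite !phiT_tt Psi_lin.
Qed.

Lemma phiT_mul x y z : phiT (mulT x y) z = phiT x (mulT y z).
Proof.
move: x; apply: (tensor_ext Ht).
- exact: klinear_comp (HT.2 y) (phiT_linl z).
- exact: phiT_linl.
move=> a b; rewrite phiT_tt; move: y; apply: (tensor_ext Ht).
- exact: klinear_comp (HT.1 _) (phiT_linl z).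
- exact: klinear_comp (HT.2 z) (Psi_lin a b).
move=> a' b'; rewrite HmulT phiT_tt; move: z; apply: (tensor_ext Ht).
- exact: Psi_lin.
- exact: klinear_comp (HT.1 _) (Psi_lin a b).
by move=> a'' b''; rewrite HmulT !Psi_tt phiA_mul phiB_mul.
Qed.

Lemma Xi_bil i j : kbilinear (fun p q => t (alA i p) (alB j q)).
Proof.
split=> [p|q]; first exact: klinear_comp (alB_lin j) (tlinr Ht _).
exact: klinear_comp (alA_lin i) (tlinl Ht _).
Qed.
Definition Xi i j := tlift Hu (Xi_bil i j).
Lemma Xi_tt i j p q : Xi i j (u p q) = t (alA i p) (alB j q).
Proof. exact: tlift_tt. Qed.
Lemma Xi_lin i j : klinear (Xi i j).
Proof. exact: tlift_lin. Qed.

Lemma Xi_spec i j a b w : phiT (Xi i j w) (t a b) = fb sA i a *: (fb sB j b *: w).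
Proof.
move: w; apply: (tensor_ext Hu).
- exact: klinear_comp (Xi_lin i j) (phiT_linl _).
- exact: klinear_comp (klinear_scale _) (klinear_scale _).
move=> p q; rewrite Xi_tt phiT_tt Psi_tt !al_spec.
by rewrite (linZ (tlinl Hu _)) (linZ (tlinr Hu _)).
Qed.

Lemma t_decomp a b : t a b =
  \sum_i \sum_j (fb sA i a * fb sB j b) *: t (eb rA i) (eb rB j).
Proof.
rewrite {1}(decomp rA_lin sAK a) {1}(decomp rB_lin sBK b) (t_sum Ht).
apply: eq_bigr => i _; apply: eq_bigr => j _.
by rewrite (linZ (tlinl Ht _)) (linZ (tlinr Ht _)) scalerA.
Qed.

Lemma phiT_surj (F : T -> U) : klinear F -> exists x, phiT x =1 F.
Proof.
move=> HF; exists (\sum_i \sum_j Xi i j (F (t (eb rA i) (eb rB j)))).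
apply: (tensor_ext Ht) => //; first exact: phiT_lin.
move=> a b; rewrite {2}(t_decomp a b) (lin_sum (phiT_linl _)) (lin_sum HF).
apply: eq_bigr => i _; rewrite (lin_sum (phiT_linl _)) (lin_sum HF).
by apply: eq_bigr => j _; rewrite Xi_spec (linZ HF) scalerA.
Qed.

Definition Inv x := \sum_i \sum_j Xi i j (phiT x (t (eb rA i) (eb rB j))).
Lemma Inv_id x : Inv x = x.
Proof.
move: x; apply: (tensor_ext Ht) => //.
- apply: klinear_sum => i; apply: klinear_sum => j.
  exact: klinear_comp (phiT_linl _) (Xi_lin i j).
move=> a b; rewrite /Inv.
transitivity (\sum_i \sum_j t (alA i (phiA a (eb rA i))) (alB j (phiB b (eb rB j)))).
  by apply: eq_bigr => i _; apply: eq_bigr => j _; rewrite phiT_tt Psi_tt Xi_tt.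
by rewrite -(t_sum Ht) alA_rec alB_rec.
Qed.

Lemma phiT_inj x y : phiT x =1 phiT y -> x = y.
Proof.
move=> E; rewrite -(Inv_id x) -(Inv_id y) /Inv.
by apply: eq_bigr => i _; apply: eq_bigr => j _; rewrite E.
Qed.

Lemma sT_bil : kbilinear (fun a b => mxvec ((sA a)^T *m sB b) : 'rV[k]_(nA * nB)).
Proof.
split=> [a|b] c x y.
- by rewrite sB_lin mulmxDr -scalemxAr linearP.
- by rewrite sA_lin linearP mulmxDl -scalemxAl linearP.
Qed.
Definition sT := tlift Ht sT_bil.
Definition rT (v : 'rV[k]_(nA * nB)) :=
  \sum_i \sum_j (vec_mx v) i j *: t (eb rA i) (eb rB j).
Lemma rT_lin : klinear rT.
Proof.
move=> c v w; rewrite /rT scaler_sumr -big_split; apply: eq_bigr => i _.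
rewrite scaler_sumr -big_split; apply: eq_bigr => j _.
by rewrite linearP !mxE scalerDl scalerA.
Qed.
Lemma sTK : cancel sT rT.
Proof.
apply: (tensor_ext Ht); first exact: klinear_comp (tlift_lin _ _) rT_lin.
  exact: klinear_id.
move=> a b; rewrite /sT tlift_tt /rT mxvecK (t_decomp a b).
apply: eq_bigr => i _; apply: eq_bigr => j _.
by rewrite mxE big_ord1 mxE.
Qed.

Lemma fgT : fgproj T.
Proof. exists (nA * nB)%N, sT, rT; split => //; [exact: tlift_lin | exact: rT_lin | exact: sTK]. Qed.

End Main.

Theorem lemma2p9 (k : comPzRingType) (P Q : lmodType k)
    (A : lmodType k) (mulA : A -> A -> A) (oneA : A)
    (B : lmodType k) (mulB : B -> B -> B) (oneB : B)
    (T : lmodType k) (t : A -> B -> T) (mulT : T -> T -> T) (oneT : T)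
    (U : lmodType k) (u : P -> Q -> U) :
  invertible_mod P -> invertible_mod Q ->
  is_kalg mulA oneA -> is_kalg mulB oneB ->
  is_Frobenius mulA oneA P -> is_Frobenius mulB oneB Q ->
  (* (T, t) is the tensor product A (x)_k B with its tensor algebra structure *)
  is_tensor t -> is_kalg mulT oneT ->
  (forall a b a' b', mulT (t a b) (t a' b') = t (mulA a a') (mulB b b')) ->
  oneT = t oneA oneB ->
  (* (U, u) is the tensor product P (x)_k Q *)
  is_tensor u ->
  is_Frobenius mulT oneT U.
Proof.
move=> _ _ HA HB [[nA [sA [rA [sAl rAl sAK]]]] [phiA [pAl pAa pAm pAi pAs]]]
  [[nB [sB [rB [sBl rBl sBK]]]] [phiB [pBl pBa pBm pBi pBs]]] Ht HT HmulT _ Hu.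
split; first exact: (fgT Ht sAl rAl sAK sBl rBl sBK).
have HTb : kbilinear mulT by case: HT.
exists (phiT HA HB Ht Hu pAl pAa pAm pBl pBa pBm); split.
- exact: phiT_lin.
- by move=> x y z; rewrite (linD (phiT_linl HA HB Ht Hu pAl pAa pAm pBl pBa pBm z)).
- exact: (phiT_mul HA HB Ht Hu HTb HmulT).
- exact: (phiT_inj pAi pAs pBi pBs sAl rAl sAK sBl rBl sBK).
- exact: (phiT_surj HA HB Ht Hu pAl pAa pAm pAi pAs pBl pBa pBm pBi pBs sAl rAl sAK sBl rBl sBK).
Qed.
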